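(* Let $\Phi=\{\phi_i\}_{i=1}^l$ be an arbitrary IFS of contractions on $\mathbb R^d$ and let $\mu=\mathfrak m\circ\pi^{-1}$ be the pushforward of a $\sigma$-invariant ergodic probability measure $\mathfrak m$ on $\mathcal D^{\mathbb N}$. Then $\mu$ is of pure type: either $\mu\ll\mathcal L$ or $\mu\perp\mathcal L$, where $\mathcal L$ is $d$-dimensional Lebesgue measure.
   Context: $\pi((a_j))=\lim_n\phi_{a_1}\circ\cdots\circ\phi_{a_n}(0)$; $\sigma$ is the left shift on $\mathcal D^{\mathbb N}$, $\mathcal D=\{1,\ldots,l\}$. *)

(* Defs.v *)
From HB Require Import structures.
From mathcomp Require Import all_boot all_order all_algebra.
From mathcomp Require Import all_classical all_reals all_analysis.
Set Implicit Arguments. Unset Strict Implicit. Unset Printing Implicit Defensive.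
Import Order.TTheory GRing.Theory Num.Theory.
Import numFieldNormedType.Exports.
Local Open Scope classical_set_scope.
Local Open Scope ring_scope.

Definition eucl_norm {R : realType} {d : nat} (x : 'rV[R]_d) : R :=
  Num.sqrt (\sum_(i < d) (x ord0 i) ^+ 2).

Definition eucl_contraction {R : realType} {d : nat} (f : 'rV[R]_d -> 'rV[R]_d) : Prop :=
  exists c : R, 0 <= c /\ c < 1 /\
    forall x y, eucl_norm (f x - f y) <= c * eucl_norm (x - y).

(* Borel sets of R^d: the sigma-algebra generated by the open sets
   (the topology of 'rV[R]_d is the usual product = Euclidean topology). *)
Definition borel_set {R : realType} {d : nat} (A : set 'rV[R]_d) : Prop :=
  <<s [set U : set 'rV[R]_d | open U] >> A.

Definition rbox {R : realType} {d : nat} (a b : 'rV[R]_d) : set 'rV[R]_d :=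
  [set x | forall i : 'I_d, a ord0 i <= x ord0 i <= b ord0 i].

Definition box_vol {R : realType} {d : nat} (a b : 'rV[R]_d) : R :=
  \prod_(i < d) Num.max 0 (b ord0 i - a ord0 i).

(* d-dimensional Lebesgue (outer) measure: infimum of the total volume of
   countable covers by boxes.  On Borel sets this is Lebesgue measure. *)
Definition lebesgue_d {R : realType} {d : nat} (A : set 'rV[R]_d) : \bar R :=
  ereal_inf [set s : \bar R | exists a b : nat -> 'rV[R]_d,
     A `<=` \bigcup_k rbox (a k) (b k) /\
     s = (\sum_(0 <= k <oo) ((box_vol (a k) (b k))%:E))%E].

(* 'I_n.+1 is nonempty: point it at ord0 (needed for the measurable-type structure). *)
HB.instance Definition _ (n : nat) := isPointed.Build 'I_n.+1 ord0.

Definition cyl_set {l : nat} (n : nat) (w : nat -> 'I_l.+1) : set (nat -> 'I_l.+1) :=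
  [set a | forall k, (k < n)%N -> a k = w k].

Definition cylinders (l : nat) : set (set (nat -> 'I_l.+1)) :=
  [set C | exists n w, C = cyl_set n w].

Notation shift_space l := (g_sigma_algebraType (@cylinders l)).

Definition left_shift {l : nat} (a : shift_space l) : shift_space l := fun n => a n.+1.

Definition shift_invariant {R : realType} {l : nat}
  (m : probability (shift_space l) R) : Prop :=
  forall A : set (shift_space l), measurable A -> m (left_shift @^-1` A) = m A.

Definition shift_ergodic {R : realType} {l : nat}
  (m : probability (shift_space l) R) : Prop :=
  forall A : set (shift_space l), measurable A -> left_shift @^-1` A = A ->
    m A = 0%E \/ m A = 1%E.

(* phi_{a_1} o ... o phi_{a_n} (letters indexed from 0 here). *)
Fixpoint prefix_comp {R : realType} {d l : nat}
  (Phi : 'I_l.+1 -> 'rV[R]_d -> 'rV[R]_d) (a : nat -> 'I_l.+1) (n : nat)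
  : 'rV[R]_d -> 'rV[R]_d :=
  match n with
  | 0 => id
  | n'.+1 => prefix_comp Phi a n' \o Phi (a n')
  end.

Definition coding {R : realType} {d l : nat}
  (Phi : 'I_l.+1 -> 'rV[R]_d -> 'rV[R]_d) (a : shift_space l) : 'rV[R]_d :=
  limn (fun n => prefix_comp Phi a n 0).

Definition push_coding {R : realType} {d l : nat}
  (Phi : 'I_l.+1 -> 'rV[R]_d -> 'rV[R]_d) (m : probability (shift_space l) R)
  (A : set 'rV[R]_d) : \bar R :=
  m (coding Phi @^-1` A).

Definition abs_cont_leb {R : realType} {d : nat} (mu : set 'rV[R]_d -> \bar R) : Prop :=
  forall A, borel_set A -> lebesgue_d A = 0%E -> mu A = 0%E.

Definition singular_leb {R : realType} {d : nat} (mu : set 'rV[R]_d -> \bar R) : Prop :=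
  exists A, borel_set A /\ mu A = 0%E /\ lebesgue_d (~` A) = 0%E.

(* Main.v *)
Require Import Defs.
From HB Require Import structures.
From mathcomp Require Import all_boot all_order all_algebra.
From mathcomp Require Import all_classical all_reals all_analysis.
From mathcomp Require Import ring lra.
Import Order.TTheory GRing.Theory Num.Theory.
Import numFieldNormedType.Exports.
Local Open Scope classical_set_scope.
Local Open Scope ring_scope.
Set Implicit Arguments. Unset Strict Implicit. Unset Printing Implicit Defensive.
Section Norms.
Variables (R : realType) (d : nat).
Implicit Types x y : 'rV[R]_d.

Lemma eucl_ge0 x : 0 <= eucl_norm x.
Proof. exact: sqrtr_ge0. Qed.

Lemma coord_le_eucl x j : `|x ord0 j| <= eucl_norm x.
Proof.
rewrite /eucl_norm -sqrtr_sqr ler_wsqrtr //.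
by rewrite (bigD1 j) //= lerDl sumr_ge0 // => i _; rewrite sqr_ge0.
Qed.

Lemma eucl_le_coord x (M : R) : 0 <= M -> (forall j, `|x ord0 j| <= M) ->
  eucl_norm x <= d%:R * M.
Proof.
move=> M0 H; rewrite /eucl_norm.
have dM : 0 <= d%:R * M by rewrite mulr_ge0.
rewrite -(ger0_norm dM) -sqrtr_sqr ler_wsqrtr //.
apply: (@le_trans _ _ (\sum_(i < d) M ^+ 2)).
  apply: ler_sum => i _; rewrite -real_normK ?num_real //.
  by rewrite lerXn2r ?nnegrE ?normr_ge0.
rewrite sumr_const card_ord exprMn -[M ^+ 2 *+ d]mulr_natl.
apply: ler_wpM2r; first exact: sqr_ge0.
case: d => [|n]; first by rewrite expr0n.
by rewrite -natrX ler_nat expnS leq_pmulr // expn_gt0.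
Qed.
Lemma coordB_le_eucl x y j : `|x ord0 j - y ord0 j| <= eucl_norm (x - y).
Proof. by have := coord_le_eucl (x - y) j; rewrite !mxE. Qed.
End Norms.
Section Coding.
Variables (R : realType) (d l : nat) (Phi : 'I_l.+1 -> 'rV[R]_d -> 'rV[R]_d).
Variables (c M0 : R) (c0 : 0 <= c) (c1 : c < 1) (M00 : 0 <= M0).
Hypothesis hPhi : forall i x y, eucl_norm (Phi i x - Phi i y) <= c * eucl_norm (x - y).
Hypothesis hM : forall i, eucl_norm (Phi i 0) <= M0.

Local Notation pc := (prefix_comp Phi).
Definition pp (a : nat -> 'I_l.+1) n := pc a n 0.
Definition BB n := M0 * c ^+ n / (1 - c).

Lemma pc_S (a : nat -> 'I_l.+1) n x :
  pc a n.+1 x = Phi (a 0%N) (pc (fun k => a k.+1) n x).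
Proof.
elim: n x => [//|n IH] x.
by rewrite /= -IH.
Qed.

Lemma pc_contr a n x y : eucl_norm (pc a n x - pc a n y) <= c ^+ n * eucl_norm (x - y).
Proof.
elim: n a x y => [|n IH] a x y; first by rewrite expr0 mul1r.
rewrite !pc_S; apply: (le_trans (hPhi _ _ _)).
rewrite exprS -mulrA; apply: ler_wpM2l => //; exact: IH.
Qed.

Lemma pp_step a n j : `|pp a n.+1 ord0 j - pp a n ord0 j| <= c ^+ n * M0.
Proof.
rewrite /pp /=.
apply: (le_trans (coordB_le_eucl _ _ _)); apply: (le_trans (pc_contr _ _ _ _)).
by apply: ler_wpM2l; [exact: exprn_ge0|rewrite subr0].
Qed.

Lemma pp_cauchy a n k j :
  `|pp a (n + k) ord0 j - pp a n ord0 j| <= M0 * (c ^+ n - c ^+ (n + k)) / (1 - c).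
Proof.
have c1' : 0 < 1 - c by rewrite subr_gt0.
elim: k => [|k IH]; first by rewrite addn0 !subrr normr0 mulr0 mul0r.
apply: (le_trans (ler_distD (pp a (n + k) ord0 j) _ _)).
rewrite addnS; apply: (le_trans (lerD (pp_step _ _ _) IH)).
rewrite ler_pdivlMr // mulrDl divfK ?gt_eqF // exprS.
rewrite [leLHS]addrC -subr_ge0; set z := c ^+ (n + k).
have -> : M0 * (c ^+ n - c * z) - (M0 * (c ^+ n - z) + z * M0 * (1 - c)) = 0.
  by rewrite /z; ring.
by [].
Qed.

Lemma pp_cauchyB a n k j : `|pp a (n + k) ord0 j - pp a n ord0 j| <= BB n.
Proof.
apply: (le_trans (pp_cauchy _ _ _ _)); rewrite /BB.
have c1' : 0 < 1 - c by rewrite subr_gt0.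
rewrite ler_pdivrMr // divfK ?gt_eqF //; apply: ler_wpM2l => //.
by rewrite gerBl exprn_ge0.
Qed.
Lemma small_exp (K eps : R) : 0 < eps -> exists n, K * c ^+ n < eps.
Proof.
move=> e0; have [K0|K0] := leP K 0.
  by exists 0%N; rewrite expr0 mulr1 (le_lt_trans K0).
have : (fun n => c ^+ n) @ \oo --> (0 : R) by apply: cvg_expr; rewrite ger0_norm.
move/cvgr0Pnorm_lt => /(_ (eps / K)) [].
  by rewrite divr_gt0.
move=> N _ HN; exists N; have := HN N (leqnn N).
by rewrite ger0_norm ?exprn_ge0 // ltr_pdivlMr // mulrC.
Qed.

Lemma pp_cvg a : cvgn (pp a).
Proof.
apply/cauchy_cvgP/cauchy_exP => e e0.
have [N HN] := small_exp (M0 / (1 - c)) e0.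
exists (pp a N); exists N => // n /= Nn.
split => // i j; rewrite (ord1 i) /ball /= distrC -(subnKC Nn).
apply: le_lt_trans (pp_cauchyB _ _ _ _) _.
by rewrite /BB mulrAC.
Qed.

Definition coding_lim a : 'rV[R]_d := limn (pp a).

Lemma pp_to_coding a : pp a @ \oo --> coding_lim a.
Proof. exact: pp_cvg. Qed.

Lemma coding_approx a n j : `|coding_lim a ord0 j - pp a n ord0 j| <= BB n.
Proof.
have cj : (fun m => pp a m ord0 j) @ \oo --> coding_lim a ord0 j.
  apply: (@continuous_cvg _ _ _ _ _ (pp a) (fun M : 'rV[R]_d => M ord0 j)).
    exact: coord_continuous.
  exact: pp_to_coding.
rewrite ler_norml; apply/andP; split.
- rewrite lerBrDr; apply: (cvgr_to_ge cj); near=> m.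
  have nm : (n <= m)%N by near: m; exists n.
  have := pp_cauchyB a n (m - n) j; rewrite subnKC // => /ler_normlP [h1 h2]; lra.
- rewrite lerBlDr; apply: (cvgr_to_le cj); near=> m.
  have nm : (n <= m)%N by near: m; exists n.
  have := pp_cauchyB a n (m - n) j; rewrite subnKC // => /ler_normlP [h1 h2]; lra.
Unshelve. all: by end_near.
Qed.
End Coding.
Section Coding2.
Variables (R : realType) (d l : nat) (Phi : 'I_l.+1 -> 'rV[R]_d -> 'rV[R]_d).
Variables (c M0 : R) (c0 : 0 <= c) (c1 : c < 1) (M00 : 0 <= M0).
Hypothesis hPhi : forall i x y, eucl_norm (Phi i x - Phi i y) <= c * eucl_norm (x - y).
Hypothesis hM : forall i, eucl_norm (Phi i 0) <= M0.

Local Notation BB := (BB c M0).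
Local Notation pp := (pp Phi).
Local Notation cod := (coding_lim Phi).

Lemma BB_ge0 n : 0 <= BB n.
Proof. by rewrite /BB divr_ge0 ?mulr_ge0 ?exprn_ge0 // subr_ge0 ltW. Qed.

Lemma BB_S n : BB n.+1 <= BB n.
Proof.
rewrite /BB; apply: ler_wpM2r; first by rewrite invr_ge0 subr_ge0 ltW.
apply: ler_wpM2l => //; by rewrite exprS ler_piMl ?exprn_ge0 // ltW.
Qed.

Lemma zero_of_small (x K : R) : (forall n, `|x| <= K * c ^+ n) -> x = 0.
Proof.
move=> H; apply/eqP; apply: contraT => /negPf x0.
have [n Hn] : exists n, K * c ^+ n < `|x| by apply: small_exp => //; rewrite normr_gt0 x0.
by have := lt_le_trans Hn (H n); rewrite ltxx.
Qed.

Lemma pc_agree (a b : nat -> 'I_l.+1) n :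
  (forall k, (k < n)%N -> a k = b k) -> forall x, prefix_comp Phi a n x = prefix_comp Phi b n x.
Proof.
elim: n => [//|n IH] H x /=.
rewrite (H n) // IH // => k kn; apply: H; exact: ltnW.
Qed.

Lemma coding_cyl (a b : nat -> 'I_l.+1) n :
  (forall k, (k < n)%N -> a k = b k) -> forall j, `|cod b ord0 j - cod a ord0 j| <= BB n *+ 2.
Proof.
move=> H j; have e : pp a n = pp b n by rewrite /pp (pc_agree H).
rewrite mulr2n; apply: le_trans (ler_distD (pp b n ord0 j) _ _) _.
apply: lerD; first exact: (coding_approx c0 c1 M00 hPhi hM).
by rewrite distrC -e; exact: (coding_approx c0 c1 M00 hPhi hM).
Qed.

Lemma coding_cons (a : nat -> 'I_l.+1) : cod a = Phi (a 0%N) (cod (fun k => a k.+1)).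
Proof.
apply/rowP => j; apply/eqP; rewrite -subr_eq0; apply/eqP.
apply: (@zero_of_small _ ((1 + d%:R) * (M0 / (1 - c)))) => n.
set s := fun k => a k.+1.
apply: le_trans (ler_distD (pp a n.+1 ord0 j) _ _) _.
have h1 := coding_approx c0 c1 M00 hPhi hM a n.+1 j.
have h2 : `|pp a n.+1 ord0 j - Phi (a 0%N) (cod s) ord0 j| <= c * (d%:R * BB n).
  rewrite /pp pc_S; apply: le_trans (coordB_le_eucl _ _ _) _.
  apply: le_trans (hPhi _ _ _) _; apply: ler_wpM2l => //.
  apply: eucl_le_coord; first exact: BB_ge0.
  move=> k; rewrite !mxE distrC; exact: (coding_approx c0 c1 M00 hPhi hM).
have h3 := BB_S n.
have h4 : c * (d%:R * BB n) <= d%:R * BB n.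
  by apply: ler_piMl; [rewrite mulr_ge0 ?BB_ge0 | exact: ltW].
have -> : (1 + d%:R) * (M0 / (1 - c)) * c ^+ n = BB n + d%:R * BB n.
  by rewrite /BB; field; rewrite subr_eq0 gt_eqF.
lra.
Qed.
End Coding2.
Lemma preimage_gen (dT : measure_display) (T : measurableType dT) (U : Type) (f : T -> U)
  (G : set (set U)) :
  (forall B, G B -> measurable (f @^-1` B)) -> forall B, <<s G >> B -> measurable (f @^-1` B).
Proof.
move=> H; apply: smallest_sub => //; split.
- by rewrite preimage_set0; exact: measurable0.
- by move=> A mA; rewrite setTD preimage_setC; exact: measurableC.
- by move=> A mA; rewrite preimage_bigcup; exact: bigcupT_measurable.
Qed.

Section Shift.
Variable l : nat.

Lemma cyl_meas n (w : nat -> 'I_l.+1) : measurable (cyl_set n w : set (shift_space l)).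
Proof. by apply: sub_sigma_algebra; exists n, w. Qed.

Lemma shift_meas (A : set (shift_space l)) : measurable A -> measurable (left_shift @^-1` A).
Proof.
move=> mA; apply: (@preimage_gen _ _ _ left_shift (@cylinders l)); last exact: mA.
move=> _ [n [w ->]].
have -> : left_shift @^-1` cyl_set n w =
   \bigcup_k (cyl_set n.+1 (fun i => if i is i'.+1 then w i' else inord k) : set (shift_space l)).
  apply/seteqP; split.
  - move=> a /= Ha; exists (a 0%N : nat) => //= [[|k]] kn /=.
      by rewrite inord_val.
    exact: Ha.
  - by move=> a [k _ Ha] i ilt; rewrite /left_shift; apply: (Ha i.+1).
by apply: bigcupT_measurable => k; exact: cyl_meas.
Qed.
End Shift.
Section CodingMeas.
Variables (R : realType) (d l : nat) (Phi : 'I_l.+1 -> 'rV[R]_d -> 'rV[R]_d).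
Variables (c M0 : R) (c0 : 0 <= c) (c1 : c < 1) (M00 : 0 <= M0).
Hypothesis hPhi : forall i x y, eucl_norm (Phi i x - Phi i y) <= c * eucl_norm (x - y).
Hypothesis hM : forall i, eucl_norm (Phi i 0) <= M0.

Lemma coding_eq : coding Phi = coding_lim Phi.
Proof. by []. Qed.

Lemma coding_open_cyl (a : nat -> 'I_l.+1) (U : set 'rV[R]_d) : open U -> U (coding Phi a) ->
  exists n, forall b : nat -> 'I_l.+1, (forall k, (k < n)%N -> a k = b k) -> U (coding Phi b).
Proof.
move=> oU Ua; have : nbhs (coding Phi a) U by exact: oU.
move=> /nbhs_ballP [e e0 eU].
have [n Hn] := small_exp c0 c1 (M0 / (1 - c) *+ 2) e0.
exists n => b Hab; apply: eU; split => // i j; rewrite (ord1 i) /ball /=.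
rewrite coding_eq distrC.
apply: le_lt_trans (coding_cyl c0 c1 M00 hPhi hM Hab j) _.
by apply: le_lt_trans Hn; rewrite /BB mulrnAl mulrAC.
Qed.
Definition word (k : nat) : nat -> 'I_l.+1 :=
  fun i => nth ord0 (odflt [::] (unpickle k)) i.

Lemma word_pickle (a : nat -> 'I_l.+1) n i : (i < n)%N -> word (pickle (mkseq a n)) i = a i.
Proof. by move=> lin; rewrite /word pickleK /= nth_mkseq. Qed.

Lemma coding_meas_open (U : set 'rV[R]_d) : open U ->
  measurable (coding Phi @^-1` U : set (shift_space l)).
Proof.
move=> oU.
pose D n k : set (shift_space l) :=
  if `[< cyl_set n (word k) `<=` coding Phi @^-1` U >] then cyl_set n (word k) else set0.
have -> : coding Phi @^-1` U = \bigcup_n \bigcup_k D n k.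
  apply/seteqP; split.
  - move=> a Ua; have [n Hn] := coding_open_cyl oU Ua.
    exists n => //; exists (pickle (mkseq a n)) => //.
    rewrite /D ifT; first by move=> k kn; rewrite word_pickle.
    apply/asboolP => b /= Hb; apply: Hn => k kn.
    by rewrite Hb // word_pickle.
  - move=> a [n _ [k _]]; rewrite /D; case: ifPn => // /asboolP H; exact: H.
apply: bigcupT_measurable => n; apply: bigcupT_measurable => k.
by rewrite /D; case: ifPn => _; [exact: cyl_meas | exact: measurable0].
Qed.

Lemma coding_meas (B : set 'rV[R]_d) : borel_set B ->
  measurable (coding Phi @^-1` B : set (shift_space l)).
Proof.
move=> bB; apply: (@preimage_gen _ (shift_space l) _ (coding Phi) [set U | open U]); last exact: bB.
by move=> U oU; exact: coding_meas_open.
Qed.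
End CodingMeas.
Section Leb.
Variables (R : realType) (d : nat).
Local Open Scope ereal_scope.

Lemma box_vol_ge0 (a b : 'rV[R]_d) : (0 <= box_vol a b)%R.
Proof. by apply: prodr_ge0 => i _; rewrite le_max lexx. Qed.

Lemma leb_le_cover (A : set 'rV[R]_d) (a b : nat -> 'rV[R]_d) :
  A `<=` \bigcup_k rbox (a k) (b k) ->
  lebesgue_d A <= \sum_(0 <= k <oo) (box_vol (a k) (b k))%:E.
Proof. by move=> H; apply: ereal_inf_lbound; exists a, b. Qed.

Lemma leb_ge0 (A : set 'rV[R]_d) : 0 <= lebesgue_d A.
Proof.
apply: le_ereal_inf_tmp => _ [a [b [_ ->]]]; apply: nneseries_ge0 => n _ _.
by rewrite lee_fin box_vol_ge0.
Qed.

Lemma leb0_cover (A : set 'rV[R]_d) : lebesgue_d A = 0 -> forall eps : R, (0 < eps)%R ->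
  exists a b : nat -> 'rV[R]_d, A `<=` \bigcup_k rbox (a k) (b k) /\
    \sum_(0 <= k <oo) (box_vol (a k) (b k))%:E < eps%:E.
Proof.
move=> A0 eps e0; have : lebesgue_d A < eps%:E by rewrite A0 lte_fin.
by move=> /ereal_inf_lt [_ [a [b [cov ->]]] lt]; exists a, b.
Qed.

Lemma leb0_of_le (A : set 'rV[R]_d) : (forall eps : R, (0 < eps)%R -> lebesgue_d A <= eps%:E) ->
  lebesgue_d A = 0.
Proof.
move=> H; apply/eqP; rewrite eq_le leb_ge0 andbT.
have := leb_ge0 A; case: (lebesgue_d A) H => [r| |] H r0.
- rewrite lee_fin; apply/negPn/negP; rewrite -ltNge => rpos.
  have := H (r / 2)%R; rewrite lee_fin => /(_ (divr_gt0 rpos _)).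
  have h2 : (0 < 2 :> R)%R by []. move=> /(_ h2); lra.
- by have := H 1%R ltr01.
- by [].
Qed.
End Leb.
Section Leb2.
Variables (R : realType) (d : nat).
Local Open Scope ereal_scope.

Lemma nat2_bij : exists e : nat -> nat * nat, set_bij setT setT e.
Proof. exact/card_set_bijP/card_esym/card_nat2. Qed.

Lemma leb_le_cover2 (A : set 'rV[R]_d) (al be : nat -> nat -> 'rV[R]_d) :
  A `<=` \bigcup_k \bigcup_r rbox (al k r) (be k r) ->
  lebesgue_d A <= \sum_(0 <= k <oo) \sum_(0 <= r <oo) (box_vol (al k r) (be k r))%:E.
Proof.
move=> cov; have [e he] := nat2_bij.
have [_ _ hs] := he.
set f := fun p : nat * nat => (box_vol (al p.1 p.2) (be p.1 p.2))%:E.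
have f0 : forall p, 0 <= f p by move=> p; rewrite lee_fin box_vol_ge0.
apply: le_trans (@leb_le_cover _ _ A (fun n => al (e n).1 (e n).2) (fun n => be (e n).1 (e n).2) _) _.
  move=> x /cov [k _ [r _ xin]].
  have [n _ en] := hs (k, r) I; exists n => //; by rewrite en.
rewrite le_eqVlt; apply/orP; left; apply/eqP.
rewrite (@nneseries_esumT _ (fun n => f (e n))) //.
rewrite -(reindex_esum setT setT e f) //.
rewrite nneseries_esumT; last by move=> k; apply: nneseries_ge0 => n _ _; rewrite lee_fin box_vol_ge0.
transitivity (\esum_(k in [set: nat]) \esum_(r in [set: nat]) f (k, r)); last first.
  apply: eq_esum => k _; rewrite nneseries_esumT //.
  by move=> n; rewrite lee_fin box_vol_ge0.
rewrite (@esum_esum _ _ _ setT (fun _ => setT) (fun k r => f (k, r))) //.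
by congr esum; apply/seteqP; split.
Qed.
End Leb2.
Section Leb3.
Variables (R : realType) (d : nat).
Local Open Scope ereal_scope.

Lemma leb_bigcup0 (A : nat -> set 'rV[R]_d) : (forall k, lebesgue_d (A k) = 0) ->
  lebesgue_d (\bigcup_k A k) = 0.
Proof.
move=> HA; apply: leb0_of_le => eps e0.
have /choice [ab Hab] : forall k, exists ab : (nat -> 'rV[R]_d) * (nat -> 'rV[R]_d),
    A k `<=` \bigcup_r rbox (ab.1 r) (ab.2 r) /\
    \sum_(0 <= r <oo) (box_vol (ab.1 r) (ab.2 r))%:E < (eps / (2 ^ k.+1)%:R)%:E.
  move=> k; have [|a [b [H1 H2]]] := leb0_cover (HA k) (eps := eps / (2 ^ k.+1)%:R).
    by rewrite divr_gt0 // ltr0n expn_gt0.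
  by exists (a, b).
apply: le_trans (@leb_le_cover2 _ _ _ (fun k => (ab k).1) (fun k => (ab k).2) _) _.
  by move=> x [k _ /(proj1 (Hab k))] [r _ xr]; exists k => //; exists r.
apply: le_trans (epsilon_trick0 xpredT (ltW e0)).
apply: lee_nneseries => [k _ _|k _]; first by apply: nneseries_ge0 => n _ _; rewrite lee_fin box_vol_ge0.
exact: ltW (proj2 (Hab k)).
Qed.

Lemma rbox_closed (a b : 'rV[R]_d) : closed (rbox a b).
Proof.
have -> : rbox a b = \bigcap_(i in [set: 'I_d])
    ((fun x : 'rV[R]_d => x ord0 i) @^-1` [set y | a ord0 i <= y]%R `&`
     (fun x : 'rV[R]_d => x ord0 i) @^-1` [set y | y <= b ord0 i]%R).
  apply/seteqP; split => x /=.
  - by move=> H i _; have /andP[] := H i.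
  - by move=> H i; have [/= -> ->] := H i I.
apply: closed_bigI => i _; apply: closedI; apply: preimage_closed.
- by move=> x _; apply: coord_continuous.
- exact: closed_ge.
- by move=> x _; apply: coord_continuous.
- exact: closed_le.
Qed.

Lemma borel_open (U : set 'rV[R]_d) : open U -> borel_set U.
Proof. by move=> oU; apply: sub_sigma_algebra. Qed.

Lemma borelC (A : set 'rV[R]_d) : borel_set A -> borel_set (~` A).
Proof. by move=> bA; rewrite -setTD; apply: sigma_algebraCD. Qed.

Lemma borel_bigcup (A : nat -> set 'rV[R]_d) : (forall k, borel_set (A k)) -> borel_set (\bigcup_k A k).
Proof. by move=> H; apply: sigma_algebra_bigcup. Qed.

Lemma borel_bigcap (A : nat -> set 'rV[R]_d) : (forall k, borel_set (A k)) -> borel_set (\bigcap_k A k).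
Proof.
move=> H; rewrite -[X in borel_set X]setCK setC_bigcap.
by apply: borelC; apply: borel_bigcup => k; apply: borelC.
Qed.

Lemma borel_closed (C : set 'rV[R]_d) : closed C -> borel_set C.
Proof.
by move=> cC; rewrite -[C]setCK; apply: borelC; apply: borel_open; rewrite openC.
Qed.

Lemma leb_hull (A : set 'rV[R]_d) : lebesgue_d A = 0 ->
  exists G, borel_set G /\ A `<=` G /\ lebesgue_d G = 0.
Proof.
move=> A0.
have /choice [ab Hab] : forall m, exists ab : (nat -> 'rV[R]_d) * (nat -> 'rV[R]_d),
    A `<=` \bigcup_r rbox (ab.1 r) (ab.2 r) /\
    \sum_(0 <= r <oo) (box_vol (ab.1 r) (ab.2 r))%:E < (((2:R)^-1) ^+ m)%:E.
  move=> m; have [|a [b [H1 H2]]] := leb0_cover A0 (eps := ((2:R)^-1) ^+ m).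
    by rewrite exprn_gt0 // invr_gt0.
  by exists (a, b).
exists (\bigcap_m \bigcup_r rbox ((ab m).1 r) ((ab m).2 r)); split; [|split].
- apply: borel_bigcap => m; apply: borel_bigcup => r; apply: borel_closed; exact: rbox_closed.
- by move=> x Ax m _; exact: (proj1 (Hab m)).
- apply: leb0_of_le => eps e0.
  have h0 : (0 <= (2:R)^-1)%R by rewrite invr_ge0.
  have h1 : ((2:R)^-1 < 1)%R by rewrite invf_lt1 // ltr1n.
  have [m Hm] := @small_exp R _ h0 h1 1%R eps e0.
  apply: le_trans (leb_le_cover _) _; last first.
    apply: ltW; apply: lt_trans (proj2 (Hab m)) _; rewrite lte_fin; by rewrite mul1r in Hm.
  by move=> x /(_ m I).
Qed.
End Leb3.
Section Image.
Variables (R : realType) (d : nat) (hd : (0 < d)%N).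
Variables (f : 'rV[R]_d -> 'rV[R]_d) (K : R) (K0 : 0 <= K).
Hypothesis hf : forall (x y : 'rV[R]_d) (t : R), 0 <= t -> (forall k, `|x ord0 k - y ord0 k| <= t) ->
  forall i, `|f x ord0 i - f y ord0 i| <= K * t.

Lemma degen_vol : box_vol (const_mx 1 : 'rV[R]_d) 0 = 0.
Proof.
rewrite /box_vol; case: d hd => // n _.
rewrite big_ord_recl !mxE sub0r.
by rewrite (_ : Num.max 0 (-1) = 0) ?mul0r // max_l // lerN10.
Qed.

Lemma series_fin (u : nat -> R) n : (forall r, 0 <= u r) -> (forall r, (n <= r)%N -> u r = 0) ->
  (\sum_(0 <= r <oo) (u r)%:E = (\sum_(0 <= r < n) u r)%:E)%E.
Proof.
move=> ug u0; rewrite (@nneseries_split _ _ 0 n); last by move=> k _; rewrite lee_fin.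
rewrite add0n eseries0 ?adde0 ?sumEFin // => i ni _.
by rewrite u0.
Qed.

Lemma box_image (a b : 'rV[R]_d) (dl : R) : 0 < dl -> exists al be : nat -> 'rV[R]_d,
  f @` rbox a b `<=` \bigcup_r rbox (al r) (be r) /\
  (\sum_(0 <= r <oo) (box_vol (al r) (be r))%:E <=
    ((2 * K) ^+ d * \prod_(i < d) (Num.max 0 (b ord0 i - a ord0 i) + dl))%:E)%E.
Proof.
move=> dp.
pose s i := Num.max 0 (b ord0 i - a ord0 i).
have s0 i : 0 <= s i by rewrite le_max lexx.
pose Ni i := (Num.truncn (s i / dl)).+1.
pose N := \max_(i < d) Ni i.
pose FT := {ffun 'I_d -> 'I_N.+1}.
pose j0 : FT := [ffun => ord0].
pose cor (j : FT) : 'rV[R]_d := \row_i (a ord0 i + (j i)%:R * dl).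
pose al0 (j : FT) : 'rV[R]_d := \row_i (f (cor j) ord0 i - K * dl).
pose be0 (j : FT) : 'rV[R]_d :=
  \row_i (f (cor j) ord0 i - K * dl + (if (j i < Ni i)%N then 2 * K * dl else 0)).
pose n := size (enum FT).
exists (fun r => if (r < n)%N then al0 (nth j0 (enum FT) r) else const_mx 1).
exists (fun r => if (r < n)%N then be0 (nth j0 (enum FT) r) else 0).
split.
- move=> _ [x xab <-].
  have xa i : 0 <= (x ord0 i - a ord0 i) / dl.
    by have /andP[h _] := xab i; rewrite divr_ge0 ?subr_ge0 // ltW.
  have jlt i : (Num.truncn ((x ord0 i - a ord0 i) / dl) < Ni i)%N.
    rewrite ltnS truncn_le_nat; apply: le_lt_trans (truncnS_gt _).
    apply: ler_wpM2r; first by rewrite invr_ge0 ltW.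
    have /andP[_ h] := xab i; rewrite /s le_max; apply/orP; right.
    by rewrite lerB.
  pose jx : FT := [ffun i => inord (Num.truncn ((x ord0 i - a ord0 i) / dl))].
  have jxE i : (jx i : nat) = Num.truncn ((x ord0 i - a ord0 i) / dl).
    rewrite ffunE inordK // ltnS; apply: (leq_trans _ (leq_bigmax i)).
    exact: ltnW (jlt i).
  exists (index jx (enum FT)) => //.
  have ir : (index jx (enum FT) < n)%N by rewrite index_mem mem_enum.
  rewrite ir nth_index ?mem_enum //.
  have cb : forall k, `|x ord0 k - cor jx ord0 k| <= dl.
    move=> k; rewrite mxE jxE.
    have /andP[h1 h2] := truncn_itv (xa k).
    move: h1 h2; set t := (Num.truncn _)%:R; set z := (_ / dl) => h1 h2.
    have zE : x ord0 k - a ord0 k = z * dl by rewrite /z divfK // gt_eqF.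
    have h1' : t * dl <= z * dl by apply: ler_wpM2r => //; exact: ltW.
    have h2' : z * dl <= (t + 1) * dl.
      by apply: ler_wpM2r; [exact: ltW | rewrite -natr1 in h2; exact: ltW].
    rewrite ler_norml; apply/andP; split; nra.
  have := hf (ltW dp) cb => hfx i.
  rewrite !mxE jxE (jlt i) /=.
  have := hfx i; rewrite ler_norml => /andP[h1 h2].
  apply/andP; split; nra.
- pose u r := box_vol
      (if (r < n)%N then al0 (nth j0 (enum FT) r) else const_mx 1)
      (if (r < n)%N then be0 (nth j0 (enum FT) r) else 0).
  have vge0 r : 0 <= u r by exact: box_vol_ge0.
  rewrite (@series_fin u n vge0); last first.
    by move=> r nr; rewrite /u ltnNge nr /= degen_vol.
  rewrite lee_fin.
  have -> : \sum_(0 <= r < n) box_vol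
      (if (r < n)%N then al0 (nth j0 (enum FT) r) else const_mx 1)
      (if (r < n)%N then be0 (nth j0 (enum FT) r) else 0) =
      \sum_(0 <= r < n) box_vol (al0 (nth j0 (enum FT) r)) (be0 (nth j0 (enum FT) r)).
    by apply: eq_big_nat => r /andP[_ rn]; rewrite rn.
  rewrite -(@big_nth _ _ _ _ j0 (enum FT) xpredT (fun j => box_vol (al0 j) (be0 j))) big_enum /=.
  pose G i (x : 'I_N.+1) := if (x < Ni i)%N then 2 * K * dl else 0.
  have -> : \sum_(j in FT) box_vol (al0 j) (be0 j) = \sum_(j : FT) \prod_i G i (j i).
    apply: eq_bigr => j _; rewrite /box_vol; apply: eq_bigr => i _.
    rewrite !mxE [_ + _ - _]addrC addKr /G.
    case: ifP => _; last by rewrite maxxx.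
    by rewrite max_r // mulr_ge0 ?mulr_ge0 // ltW.
  rewrite -(bigA_distr_bigA G).
  have -> : (2 * K) ^+ d * \prod_(i < d) (s i + dl) = \prod_(i < d) (2 * K * (s i + dl)).
    by rewrite big_split /= prodr_const card_ord.
  apply: ler_prod => i _; apply/andP; split.
    by apply: sumr_ge0 => x _; rewrite /G; case: ifP => // _; rewrite mulr_ge0 ?mulr_ge0 // ltW.
  have NiN : (Ni i <= N.+1)%N by apply: leq_trans (leq_bigmax i) _.
  rewrite /G -(big_mkord xpredT (fun x : nat => if (x < Ni i)%N then 2 * K * dl else 0)).
  rewrite (big_cat_nat _ (n := Ni i)) //= [X in _ + X]big1_seq ?addr0; last first.
    by move=> x /andP[_]; rewrite mem_index_iota => /andP[h _]; rewrite ltnNge h.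
  rewrite big_nat_cond (eq_bigr (fun=> 2 * K * dl)); last first.
    by move=> x /andP[/andP[_ ->]].
  rewrite -big_nat_cond sumr_const_nat subn0.
  have ht : (Num.truncn (s i / dl))%:R * dl <= s i.
    rewrite -ler_pdivlMr // truncn_le divr_ge0 // ltW //.
  rewrite /Ni -[(2 * K * dl) *+ _]mulr_natr -natr1.
  set t := (Num.truncn _)%:R in ht *.
  have ht2 : 0 <= s i - t * dl by rewrite subr_ge0.
  have := mulr_ge0 K0 ht2.
  nra.
Qed.

Lemma prod_add_le n (s : 'I_n -> R) (t : R) : (forall i, 0 <= s i) -> 0 <= t -> t <= 1 ->
  \prod_(i < n) (s i + t) <= \prod_(i < n) s i + t * (n%:R * \prod_(i < n) (s i + 1)).
Proof.
elim: n s => [|n IH] s s0 t0 t1; first by rewrite !big_ord0 mul0r mulr0 addr0.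
rewrite big_ord_recr [X in _ <= X + _]big_ord_recr [X in _ <= _ + _ * (_ * X)]big_ord_recr /=.
set P := \prod_(i < n) s (widen_ord _ i).
set Q := \prod_(i < n) (s (widen_ord _ i) + t).
set T := \prod_(i < n) (s (widen_ord _ i) + 1).
set x := s ord_max.
have IHs : Q <= P + t * (n%:R * T) by apply: IH.
have P0 : 0 <= P by apply: prodr_ge0.
have Q0 : 0 <= Q by apply: prodr_ge0 => i _; rewrite addr_ge0.
have PT : P <= T by apply: ler_prod => i _; rewrite s0 /= lerDl.
have x0 : 0 <= x by exact: s0.
have n0 : 0 <= n%:R :> R by exact: ler0n.
have T0 : 0 <= T by apply: le_trans PT.
rewrite -natr1.
have h1 : Q * (x + t) <= (P + t * (n%:R * T)) * (x + t) by apply: ler_wpM2r => //; rewrite addr_ge0.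
have h2 : t * P <= t * (T * (x + 1)) by apply: ler_wpM2l => //; apply: le_trans PT _; rewrite ler_peMr // lerDr.
have h3 : t * (n%:R * T) * t <= t * (n%:R * T) * 1 by apply: ler_wpM2l => //; rewrite !mulr_ge0.
nra.
Qed.

Lemma leb_image0 (A : set 'rV[R]_d) : lebesgue_d A = 0%E -> lebesgue_d (f @` A) = 0%E.
Proof.
move=> A0; apply: leb0_of_le => eps e0.
set C := (2 * K) ^+ d.
have C0 : 0 <= C by rewrite exprn_ge0 // mulr_ge0.
set eta := eps / (2 * C + 2).
have eta0 : 0 < eta by rewrite divr_gt0 // ltr_wpDl // mulr_ge0.
have [a [b [cov sum]]] := leb0_cover A0 eta0.
pose s k i := Num.max 0 (b k ord0 i - a k ord0 i).
have s0 k i : 0 <= s k i by rewrite le_max lexx.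
pose D k := d%:R * \prod_(i < d) (s k i + 1).
have D0 k : 0 <= D k by rewrite mulr_ge0 // prodr_ge0 // => i _; rewrite addr_ge0.
pose e k := eta / (2 ^ k.+1)%:R.
have e0' k : 0 < e k by rewrite divr_gt0 // ltr0n expn_gt0.
pose dl k := Num.min 1 (e k / (D k + 1)).
have dl0 k : 0 < dl k.
  by rewrite lt_min ltr01 divr_gt0 // ltr_wpDl.
have dlD k : dl k * D k <= e k.
  have : dl k <= e k / (D k + 1) by rewrite ge_min lexx orbT.
  move=> h; apply: le_trans (ler_wpM2r (D0 k) h) _.
  rewrite mulrAC ler_pdivrMr ?ltr_wpDl //; apply: ler_wpM2l; first exact: ltW.
  by rewrite lerDl.
have hk k : \prod_(i < d) (s k i + dl k) <= box_vol (a k) (b k) + e k.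
  apply: le_trans (prod_add_le (s0 k) (ltW (dl0 k)) _) _; first by rewrite ge_min lexx.
  by rewrite lerD // mulrC.
have /choice [ab Hab] : forall k, exists ab : (nat -> 'rV[R]_d) * (nat -> 'rV[R]_d),
    f @` rbox (a k) (b k) `<=` \bigcup_r rbox (ab.1 r) (ab.2 r) /\
    (\sum_(0 <= r <oo) (box_vol (ab.1 r) (ab.2 r))%:E <= (C * \prod_(i < d) (s k i + dl k))%:E)%E.
  move=> k; have [al [be [h1 h2]]] := box_image (a k) (b k) (dl0 k).
  by exists (al, be).
apply: (le_trans (@leb_le_cover2 _ _ _ (fun k => (ab k).1) (fun k => (ab k).2) _)).
  move=> _ [x /cov [k _ xk] <-].
  have [r _ hr] := proj1 (Hab k) (f x) (ex_intro2 _ _ x xk erefl).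
  by exists k => //; exists r.
apply: (le_trans (lee_nneseries _ (fun k _ => proj2 (Hab k)))).
  by move=> k _ _; apply: nneseries_ge0 => r _ _; rewrite lee_fin box_vol_ge0.
apply: (@le_trans _ _ (\sum_(0 <= k <oo) (C%:E * ((box_vol (a k) (b k))%:E + (eta / (2 ^ k.+1)%:R)%:E)))%E).
  apply: lee_nneseries => [k _ _|k _]; first by rewrite lee_fin mulr_ge0 // prodr_ge0 // => i _; rewrite addr_ge0 // ltW.
  by rewrite -EFinD -EFinM lee_fin ler_wpM2l.
rewrite nneseriesZl; last by move=> k _; rewrite -EFinD lee_fin addr_ge0 ?box_vol_ge0 // (ltW (e0' k)).
apply: (le_trans (lee_wpmul2l _ (epsilon_trick xpredT _ (ltW eta0)))).
- by rewrite lee_fin.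
- by move=> k; rewrite lee_fin box_vol_ge0.
have hs : (\sum_(0 <= k <oo) (box_vol (a k) (b k))%:E + eta%:E <= (eta + eta)%:E)%E.
  by rewrite EFinD leeD2r // ltW.
apply: (le_trans (lee_wpmul2l _ hs)); first by rewrite lee_fin.
rewrite -EFinM lee_fin /eta.
have hC : 0 < 2 * C + 2 by rewrite ltr_wpDl // mulr_ge0.
have -> : C * (eps / (2 * C + 2) + eps / (2 * C + 2)) = eps * (2 * C / (2 * C + 2)).
  by field; rewrite gt_eqF.
apply: ler_piMr; first exact: ltW.
by rewrite ler_pdivrMr // mul1r lerDl.
Qed.
End Image.
Section Ergodic.
Variables (R : realType) (l : nat) (m : probability (shift_space l) R).
Hypotheses (hinv : shift_invariant m) (herg : shift_ergodic m).
Local Open Scope ereal_scope.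

Lemma ergodic_forward (B : set (shift_space l)) : measurable B ->
  left_shift @^-1` B `<=` B -> m B = 0 \/ m B = 1.
Proof.
move=> mB sB.
pose F n : set (shift_space l) := (iter n left_shift) @^-1` B.
have FS n : F n.+1 = left_shift @^-1` F n.
  by apply/seteqP; split => x; rewrite /F /preimage /mkset iterSr.
have mF n : measurable (F n).
  elim: n => [|n IH]; first exact: mB.
  by rewrite FS; exact: shift_meas.
have mFn n : m (F n) = m B.
  elim: n => [//|n IH]; by rewrite FS hinv.
have Fdec n : F n.+1 `<=` F n.
  by move=> x; rewrite /F /preimage /mkset iterS => /sB.
have ni : nonincreasing_seq F.
  apply/nonincreasing_seqP => n; apply/subsetPset; exact: Fdec.
have mI : measurable (\bigcap_n F n) by exact: bigcapT_measurable.
have cv := nonincreasing_cvg_mu (mu := m) (le_lt_trans (probability_le1 m (mF 0%N)) (ltry _)) mF mI ni.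
have eqI : m (\bigcap_n F n) = m B.
  apply: (@cvg_unique _ _ (m \o F @ \oo)) => //.
  apply: cvg_near_cst; apply: nearW => n /=; exact: mFn.
have inv : left_shift @^-1` (\bigcap_n F n) = \bigcap_n F n.
  apply/seteqP; split => x /= H.
  - move=> [|n] _; last by have := H n I; rewrite /F /preimage /mkset iterSr.
    by apply: sB => /=; exact: (H 0%N I).
  - by move=> n _; have := H n.+1 I; rewrite /F /preimage /mkset iterSr.
by rewrite -eqI; apply: herg.
Qed.
End Ergodic.
Lemma fin_bound (R : realType) (I : finType) (F : I -> R) :
  exists c, 0 <= c /\ (forall i, F i <= c) /\ (c = 0 \/ exists i, c = F i).
Proof.
suff H : forall s : seq I, exists c, 0 <= c /\ (forall i, i \in s -> F i <= c) /\
    (c = 0 \/ exists i, c = F i).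
  have [c [c0 [Hc Hc']]] := H (enum I).
  by exists c; split => //; split => // i; apply: Hc; rewrite mem_enum.
elim => [|x s [c [c0 [Hc Hc']]]]; first by exists 0; split => //; split => //; left.
case: (leP (F x) c) => h.
  exists c; split => //; split => //.
  by move=> i; rewrite inE => /orP [/eqP -> | /Hc].
exists (F x); split; first exact: le_trans c0 (ltW h).
split; last by right; exists x.
move=> i; rewrite inE => /orP [/eqP -> // | /Hc hi].
exact: le_trans hi (ltW h).
Qed.

Lemma leb_d0 (R : realType) (A : set 'rV[R]_0) : lebesgue_d A <> 0%E.
Proof.
have : (1%:E <= lebesgue_d A)%E.
  apply: le_ereal_inf_tmp => _ [a [b [_ ->]]].
  apply: le_trans (nneseries_lim_ge 1 _); last first.
    by move=> n _ _; rewrite lee_fin box_vol_ge0.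
  by rewrite big_nat1 /box_vol big_ord0.
by move=> h e; rewrite e lee_fin ler10 in h.
Qed.

Unset Implicit Arguments.
Unset Strict Implicit.

Theorem mainTheorem18 (R : realType) (d l : nat)
  (Phi : 'I_l.+1 -> 'rV[R]_d -> 'rV[R]_d)
  (hPhi : forall i, eucl_contraction (Phi i))
  (m : probability (shift_space l) R)
  (hinv : shift_invariant m) (herg : shift_ergodic m) :
  abs_cont_leb (push_coding Phi m) \/ singular_leb (push_coding Phi m).
Proof.
case: (posnP d) => [d0|dpos].
  by left => A _ LA; exfalso; move: A LA; rewrite d0 => A /leb_d0.
have /choice [cf hcf] := hPhi.
have [c [c0 [Hc Hc']]] := fin_bound cf.
have c1 : c < 1.
  case: Hc' => [->|[i ->]]; first exact: ltr01.
  by have [_ [h _]] := hcf i.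
have hPhi' : forall i x y, eucl_norm (Phi i x - Phi i y) <= c * eucl_norm (x - y).
  move=> i x y; have [h0 [_ h]] := hcf i; apply: le_trans (h x y) _.
  by apply: ler_wpM2r; [exact: eucl_ge0 | exact: Hc].
have [M0 [M00 [HM _]]] := fin_bound (fun i => eucl_norm (Phi i 0)).
have hf : forall i (x y : 'rV[R]_d) (t : R), 0 <= t -> (forall k, `|x ord0 k - y ord0 k| <= t) ->
    forall j, `|Phi i x ord0 j - Phi i y ord0 j| <= d%:R * t.
  move=> i x y t t0 H j; apply: le_trans (coordB_le_eucl _ _ _) _.
  apply: le_trans (hPhi' _ _ _) _.
  have e : eucl_norm (x - y) <= d%:R * t.
    by apply: eucl_le_coord => // k; rewrite !mxE; exact: H.
  apply: le_trans (ler_wpM2l c0 e) _.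
  by apply: ler_piMl; [rewrite mulr_ge0 | exact: ltW].
have imnull : forall i X, lebesgue_d X = 0%E -> lebesgue_d (Phi i @` X) = 0%E.
  by move=> i X; apply: (@leb_image0 R d dpos (Phi i) d%:R (ler0n _ _) (hf i)).
case: (pselect (abs_cont_leb (push_coding Phi m))) => [h|]; first by left.
move=> /existsNP [A /not_implyP [bA /not_implyP [LA muA]]].
right.
have /choice [H hH] : forall X : set 'rV[R]_d, exists Y : set 'rV[R]_d,
    lebesgue_d X = 0%E -> borel_set Y /\ X `<=` Y /\ lebesgue_d Y = 0%E.
  move=> X; case: (pselect (lebesgue_d X = 0%E)) => [X0|nX0].
    by have [Y hY] := leb_hull X0; exists Y.
  by exists set0.
pose Next (X : set 'rV[R]_d) : set 'rV[R]_d :=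
  H (\bigcup_k (if k is k'.+1 then Phi (inord k') @` X else X)).
pose Gs n := iter n Next (H A).
have Gs0 n : lebesgue_d (Gs n) = 0%E /\ borel_set (Gs n).
  elim: n => [|n [IH1 IH2]]; first by have [? [? ?]] := hH A LA.
  have U0 : lebesgue_d (\bigcup_k (if k is k'.+1 then Phi (inord k') @` Gs n else Gs n)) = 0%E.
    by apply: leb_bigcup0 => -[|k] //; exact: imnull.
  by have [? [? ?]] := hH _ U0.
have GsS n : (Gs n `<=` Gs n.+1) /\ (forall i, Phi i @` Gs n `<=` Gs n.+1).
  have U0 : lebesgue_d (\bigcup_k (if k is k'.+1 then Phi (inord k') @` Gs n else Gs n)) = 0%E.
    by apply: leb_bigcup0 => -[|k] //; [exact: (proj1 (Gs0 n)) | apply: imnull; exact: (proj1 (Gs0 n))].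
  have [_ [sub _]] := hH _ U0.
  split; first by move=> x xG; apply: sub; exists 0%N.
  by move=> i y yi; apply: sub; exists i.+1 => //=; rewrite inord_val.
pose G := \bigcup_n Gs n.
have bG : borel_set G by apply: borel_bigcup => n; exact: (proj2 (Gs0 n)).
have LG : lebesgue_d G = 0%E by apply: leb_bigcup0 => n; exact: (proj1 (Gs0 n)).
have AG : A `<=` G by move=> x Ax; exists 0%N => //; have [_ [h _]] := hH A LA; exact: h.
have PhiG : forall i, Phi i @` G `<=` G.
  by move=> i _ [x [n _ xn] <-]; exists n.+1 => //; apply: (proj2 (GsS n) i); exists x.
pose B := coding Phi @^-1` G.
have mB : measurable B := coding_meas c0 c1 M00 hPhi' HM bG.
have sB : left_shift @^-1` B `<=` B.
  move=> a /= Ha; rewrite /B /preimage /mkset coding_eq (coding_cons c0 c1 M00 hPhi' HM).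
  by apply: (PhiG (a 0%N)); exists (coding Phi (left_shift a)).
have mA : measurable (coding Phi @^-1` A : set (shift_space l)) := coding_meas c0 c1 M00 hPhi' HM bA.
case: (ergodic_forward hinv herg mB sB) => [mB0|mB1].
  exfalso; apply: muA; apply/eqP; rewrite eq_le measure_ge0 andbT -mB0.
  by apply: le_measure; rewrite ?inE // => a /= /AG.
exists (~` G); split; first exact: borelC.
split; last by rewrite setCK.
rewrite /push_coding preimage_setC probability_setC // -/B mB1 subee //.
Qed.
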